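(* Fix $\alpha\in(0,1/2)$ and $q_1,q_3\in(0,1)$. Define $m^*(3/4,3/4)=16\alpha$, $m^*(3/4,1/4)=m^*(1/4,3/4)=\frac{8(1-2\alpha)}{3}$, $m^*(1/4,1/4)=\frac{16\alpha}{9}$, $m^*=\frac{16(4\alpha+3)}{9}$, $\overline{q}^*=\frac{8\alpha+3}{8\alpha+6}$, $$\overline{q}=\frac{1}{m^*}\Big[\big(m^*(\tfrac34,\tfrac34)+m^*(\tfrac34,\tfrac14)\big)q_3+\big(m^*(\tfrac14,\tfrac34)+m^*(\tfrac14,\tfrac14)\big)q_1\Big],$$ and the treatment's steady-state ARQ $$Q=\dfrac{q_3\frac{2(4\alpha+1)}{3(1-q_3)}+q_1\frac{2(3-4\alpha)}{3(1-q_1)}}{\frac{2(4\alpha+1)}{3(1-q_3)}+\frac{2(3-4\alpha)}{3(1-q_1)}}.$$ If $(12\alpha+3)q_3+(3-4\alpha)q_1>8\alpha+3$ and $\frac{4\alpha+1}{1-q_3}+\frac{3-4\alpha}{1-q_1}<\frac{8(4\alpha+3)}{3}$, then $\overline{q}>\overline{q}^*$ but $Q<\overline{q}^*$.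
   Context: Model: user types $(x,e)\in\{1/4,3/4\}^2$ with per-period inflow masses $\alpha$ for $(3/4,3/4)$ and $(1/4,1/4)$ and $1/2-\alpha$ for $(3/4,1/4)$ and $(1/4,3/4)$; an algorithm gives quality $q(x)\in(0,1)$ to segment $x$ and a type-$(x,e)$ user churns each period with probability $(1-q(x))(1-e)$. $m^*(x,e)$ is the status quo ($q^*(x)=x$) steady-state mass, $\overline{q}^*$ the status quo ARQ, $\overline{q}$ the ARQ observed in a one-period experiment of the treatment ($q(1/4)=q_1$, $q(3/4)=q_3$) on the status quo population, and $Q$ the ARQ of the treatment at its own steady state. *)

(* Defs.v *)
From Stdlib Require Import Reals.
Open Scope R_scope.

Definition m33 (a : R) : R := 16 * a.
Definition m31 (a : R) : R := 8 * (1 - 2 * a) / 3.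
Definition m13 (a : R) : R := 8 * (1 - 2 * a) / 3.
Definition m11 (a : R) : R := 16 * a / 9.
Definition mstar (a : R) : R := 16 * (4 * a + 3) / 9.

Definition qbar_star (a : R) : R := (8 * a + 3) / (8 * a + 6).

(* ARQ observed in the one-period experiment. *)
Definition qbar (a q1 q3 : R) : R :=
  / mstar a * ((m33 a + m31 a) * q3 + (m13 a + m11 a) * q1).

Definition Qss (a q1 q3 : R) : R :=
  (q3 * (2 * (4 * a + 1) / (3 * (1 - q3))) + q1 * (2 * (3 - 4 * a) / (3 * (1 - q1))))
  / (2 * (4 * a + 1) / (3 * (1 - q3)) + 2 * (3 - 4 * a) / (3 * (1 - q1))).

(* Main.v *)
Require Import Defs.
From Stdlib Require Import Reals Lra.
Open Scope R_scope.

Theorem lemma2 (a q1 q3 : R) :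
  0 < a < 1/2 -> 0 < q1 < 1 -> 0 < q3 < 1 ->
  (12 * a + 3) * q3 + (3 - 4 * a) * q1 > 8 * a + 3 ->
  (4 * a + 1) / (1 - q3) + (3 - 4 * a) / (1 - q1) < 8 * (4 * a + 3) / 3 ->
  qbar a q1 q3 > qbar_star a /\ Qss a q1 q3 < qbar_star a.
Proof.
  intros Ha Hq1 Hq3 H1 H2.
  assert (Hu : 1 - q3 > 0) by lra.
  assert (Hv : 1 - q1 > 0) by lra.
  split.
  - assert (E : qbar a q1 q3 - qbar_star a
              = ((12 * a + 3) * q3 + (3 - 4 * a) * q1 - (8 * a + 3)) / (2 * (4 * a + 3))).
    { unfold qbar, qbar_star, mstar, m33, m31, m13, m11. field. lra. }
    assert (0 < ((12 * a + 3) * q3 + (3 - 4 * a) * q1 - (8 * a + 3)) / (2 * (4 * a + 3))).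
    { apply Rdiv_lt_0_compat; lra. }
    lra.
  - set (W := (4 * a + 1) / (1 - q3) + (3 - 4 * a) / (1 - q1)) in *.
    assert (HW : 0 < W).
    { unfold W. apply Rplus_lt_0_compat; apply Rdiv_lt_0_compat; lra. }
    assert (E : qbar_star a - Qss a q1 q3
              = (4 * (8 * a + 6) - 3 * W) / (W * (8 * a + 6))).
    { unfold qbar_star, Qss, W in *. field.
      assert (0 < (4 * a + 1) * (1 - q1)) by (apply Rmult_lt_0_compat; lra).
      assert (0 < (3 - 4 * a) * (1 - q3)) by (apply Rmult_lt_0_compat; lra).
      repeat split; lra. }
    assert (0 < (4 * (8 * a + 6) - 3 * W) / (W * (8 * a + 6))).
    { apply Rdiv_lt_0_compat; [lra|]. apply Rmult_lt_0_compat; lra. }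
    lra.
Qed.
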